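(* Let $F_1:\mathbb{C}\to\mathbb{R}$, $F_1(z)=|z|^2(\ln|z|^2-1)$ for $z\ne0$ and $F_1(0)=0$. For all $z_1,z_2\in\mathbb{C}$, setting $\zeta:=z_1-z_2$, $$F_1(z_1)\le F_1(z_2)+2\Re(z_2\overline{\zeta})\ln|z_2|^2+2|\zeta|^2\Big(\ln\big(\max(|z_2|,|z_1|)\big)+1\Big),$$ where, when $z_2=0$, the second term on the right-hand side is understood as $0$, and when moreover $z_1=0$, the last term is also understood as $0$. *)

(* Defs.v *)
From Stdlib Require Import Reals.
From Coquelicot Require Import Coquelicot.
Open Scope R_scope.

Definition F1 (z : C) : R :=
  if Req_EM_T (Cmod z) 0 then 0
  else (Cmod z ^ 2) * (ln (Cmod z ^ 2) - 1).

Definition second_term (z2 zeta : C) : R :=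
  if Req_EM_T (Cmod z2) 0 then 0
  else 2 * Re (z2 * Cconj zeta) * ln (Cmod z2 ^ 2).

Definition last_term (z1 z2 zeta : C) : R :=
  if Req_EM_T (Rmax (Cmod z2) (Cmod z1)) 0 then 0
  else 2 * (Cmod zeta ^ 2) * (ln (Rmax (Cmod z2) (Cmod z1)) + 1).

(* Main.v *)
Require Import Defs.
From Stdlib Require Import Reals.
From Coquelicot Require Import Coquelicot.
From Stdlib Require Import Lra Psatz.
Open Scope R_scope.
Lemma ln_le_m1 x : 0 < x -> ln x <= x - 1.
Proof. intros. pose proof (exp_ineq1_le (ln x)). rewrite exp_ln in H0; lra. Qed.

Lemma lnB r : 1 <= r -> 2*r*ln r <= r^2 - 1.
Proof.
  intros Hr. destruct (Req_dec r 1) as [->|Hne].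
  { rewrite ln_1. lra. }
  destruct (MVT_cor2 (fun x => x^2 - 1 - 2*x*ln x) (fun x => 2*x - 2*ln x - 2) 1 r)
    as [c [Hc Hc2]]; [lra| |].
  { intros c Hc. apply is_derive_Reals. auto_derive; [lra|]. field. lra. }
  rewrite ln_1 in Hc. pose proof (ln_le_m1 c ltac:(lra)).
  assert (0 <= (2*c - 2*ln c - 2) * (r - 1)) by (apply Rmult_le_pos; lra).
  lra.
Qed.

Lemma lnA r : 1 <= r -> (r-1) - (r-1)^2/2 <= ln r.
Proof.
  intros Hr. destruct (Req_dec r 1) as [->|Hne].
  { rewrite ln_1. lra. }
  destruct (MVT_cor2 (fun x => ln x - (x-1) + (x-1)^2/2) (fun x => /x - 1 + (x-1)) 1 r)
    as [c [Hc Hc2]]; [lra| |].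
  { intros c Hc. apply is_derive_Reals. auto_derive; [lra|]. field. lra. }
  rewrite ln_1 in Hc.
  assert (/c - 1 + (c-1) = (c-1)^2 / c) by (field; lra).
  assert (0 <= (c-1)^2/c) by (apply Rdiv_le_0_compat; nra).
  assert (0 <= (/c - 1 + (c-1)) * (r - 1)) by (apply Rmult_le_pos; lra).
  lra.
Qed.

Lemma core (a b p la lb : R) : 0 < a -> 0 < b -> p <= a*b -> la = ln a -> lb = ln b ->
 a^2 * (2*la - 1) <= b^2*(2*lb - 1) + 2*(p - b^2)*(2*lb) + 2*(a^2+b^2-2*p)*(ln (Rmax b a) + 1).
Proof.
  intros Ha Hb Hp Hla Hlb.
  destruct (Rle_dec a b) as [Hab|Hab].
  - rewrite Rmax_left by lra. rewrite <- Hlb.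
    pose proof (lnA (b/a) ltac:(apply Rcomplements.Rle_div_r; lra)).
    rewrite ln_div in H by lra. rewrite <- Hla, <- Hlb in H.
    assert (H2: 2*a^2*(lb-la) >= 2*a*(b-a) - (b-a)^2).
    { assert (E: 2*a*(b-a) - (b-a)^2 = 2*a^2*((b/a-1) - (b/a-1)^2/2)) by (field; lra).
      rewrite E. apply Rle_ge. apply Rmult_le_compat_l; nra. }
    nra.
  - rewrite Rmax_right by lra. rewrite <- Hla.
    pose proof (lnB (a/b) ltac:(apply Rcomplements.Rle_div_r; lra)).
    rewrite ln_div in H by lra. rewrite <- Hla, <- Hlb in H.
    assert (H2: 2*a*b*(la-lb) <= a^2 - b^2).
    { assert (E: a^2 - b^2 = b^2*((a/b)^2 - 1)) by (field; lra).
      assert (E2: 2*a*b*(la-lb) = b^2*(2*(a/b)*(la-lb))) by (field; lra).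
      rewrite E, E2. apply Rmult_le_compat_l; nra. }
    assert (L0: 0 <= la - lb).
    { rewrite Hla, Hlb. destruct (Req_dec a b). subst; lra. pose proof (ln_increasing b a Hb ltac:(lra)); lra. }
    assert (Pm: 0 <= (a*b - p)*(4 + 4*la - 4*lb)) by (apply Rmult_le_pos; lra).
    assert (K: b*(4*a-2*b)*(la-lb) <= 3*a^2-4*a*b+b^2).
    { apply (Rmult_le_reg_l a); [lra|].
      assert (E: a*(b*(4*a-2*b)*(la-lb)) = (2*a-b)*(2*a*b*(la-lb))) by ring.
      rewrite E.
      apply Rle_trans with ((2*a-b)*(a^2-b^2)).
      apply Rmult_le_compat_l; lra.
      assert (0 <= (a-b)^3) by (apply pow_le; lra). nra. }
    nra.
Qed.

Theorem mainTheorem8 (z1 z2 : C) :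
  let zeta := (z1 - z2)%C in
  F1 z1 <= F1 z2 + second_term z2 zeta + last_term z1 z2 zeta.
Proof.
  intros zeta. unfold zeta, F1, second_term, last_term. clear zeta.
  destruct z1 as [x1 y1], z2 as [x2 y2].
  assert (Ea: Cmod (x1,y1) ^ 2 = x1^2 + y1^2).
  { unfold Cmod. rewrite pow2_sqrt; simpl; nra. }
  assert (Eb: Cmod (x2,y2) ^ 2 = x2^2 + y2^2).
  { unfold Cmod. rewrite pow2_sqrt; simpl; nra. }
  assert (Ez: Cmod ((x1,y1) - (x2,y2))%C ^ 2 = (x1-x2)^2 + (y1-y2)^2).
  { unfold Cmod. rewrite pow2_sqrt; [simpl; ring | simpl; apply Rplus_le_le_0_compat; rewrite Rmult_1_r; apply Rle_0_sqr]. }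
  assert (Er: Re ((x2,y2) * Cconj ((x1,y1) - (x2,y2)))%C = (x1*x2+y1*y2) - (x2^2+y2^2)).
  { simpl. ring. }
  pose proof (Cmod_ge_0 (x1,y1)) as Ha0. pose proof (Cmod_ge_0 (x2,y2)) as Hb0.
  set (a := Cmod (x1,y1)) in *. set (b := Cmod (x2,y2)) in *.
  set (p := x1*x2+y1*y2) in *.
  assert (Hp: p <= a*b).
  { assert (p^2 <= (a*b)^2).
    { rewrite Rpow_mult_distr, Ea, Eb. unfold p.
      assert (0 <= (x1*y2 - x2*y1)^2) by apply pow2_ge_0. nra. }
    apply Rsqr_incr_0_var; [unfold Rsqr; simpl in H; lra | apply Rmult_le_pos; lra]. }
  rewrite Ez, Er.
  destruct (Req_EM_T a 0) as [A0|A0]; destruct (Req_EM_T b 0) as [B0|B0].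
  - rewrite A0, B0, Rmax_left by lra. destruct (Req_EM_T 0 0); lra.
  - rewrite A0, Rmax_left by lra. destruct (Req_EM_T b 0); [lra|].
    assert (x1 = 0 /\ y1 = 0) as [-> ->].
    { rewrite A0 in Ea. split; nra. }
    rewrite ln_pow by lra. simpl INR.
    replace ((0-x2)^2 + (0-y2)^2) with (b^2) by (rewrite Eb; ring).
    unfold p. rewrite <- Eb.
    apply Rle_trans with (b^2); [apply pow2_ge_0 | right; ring].
  - destruct (Req_EM_T b 0) as [B1|B1]; [|lra].
    rewrite B0, Rmax_right by lra. destruct (Req_EM_T a 0); [lra|].
    assert (x2 = 0 /\ y2 = 0) as [-> ->].
    { rewrite B0 in Eb. split; nra. }
    rewrite ln_pow by lra. simpl INR.
    replace ((x1-0)^2 + (y1-0)^2) with (a^2) by (rewrite Ea; ring).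
    assert (0 <= a^2) by apply pow2_ge_0.
    apply Rle_trans with (a ^ 2 * ((1 + 1) * ln a - 1) + 3 * a^2); [lra | right; ring].
  - destruct (Req_EM_T b 0) as [B1|B1]; [lra|].
    destruct (Req_EM_T (Rmax b a) 0) as [M0|M0].
    { exfalso. destruct (Rle_dec b a). rewrite Rmax_right in M0 by lra. lra.
      rewrite Rmax_left in M0 by lra. lra. }
    rewrite !ln_pow by lra. simpl INR.
    replace ((x1-x2)^2 + (y1-y2)^2) with (a^2+b^2-2*p) by (rewrite Ea, Eb; unfold p; ring).
    rewrite <- Eb.
    pose proof (core a b p (ln a) (ln b) ltac:(lra) ltac:(lra) Hp eq_refl eq_refl).
    apply Rle_trans with (b^2*(2*ln b - 1) + 2*(p - b^2)*(2*ln b) + 2*(a^2+b^2-2*p)*(ln (Rmax b a) + 1)).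
    + apply Rle_trans with (a^2*(2*ln a - 1)); [right; ring | exact H].
    + right; ring.
Qed.
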